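(* Let $(\mathfrak g,[-,-])$ be a Lie algebra, $(\rho,V)$ a representation, and $T:V\to\mathfrak g$ an admissible anti-$\mathcal O$-operator of $(\mathfrak g,[-,-])$ associated to $(\rho,V)$. Then $T$ is strong. Moreover, $(V,\circ)$ with $u\circ v=-\rho(T(u))v$ is an admissible Novikov algebra.
   Context: All vector spaces are finite-dimensional over a field $\mathbb F$ of characteristic $0$. A linear map $T:V\to\mathfrak g$ is an anti-$\mathcal O$-operator associated to $(\rho,V)$ if $[T(u),T(v)]=T(\rho(T(v))u-\rho(T(u))v)$ for all $u,v\in V$; it is strong if $\rho([T(u),T(v)])w+\rho([T(v),T(w)])u+\rho([T(w),T(u)])v=0$ for all $u,v,w$; it is admissible if $2\rho(T(u))\rho(T(v))w-2\rho(T(u))\rho(T(w))v=\rho(T(\rho(T(u))v))w-\rho(T(\rho(T(u))w))v$ for all $u,v,w\in V$. For a bilinear operation $\circ$ write $[x,y]=x\circ y-y\circ x$; an admissible Novikov algebra is $(A,\circ)$ with $x\circ(y\circ z)-y\circ(x\circ z)=[y,x]\circ z$ and $2x\circ[y,z]=(x\circ y)\circ z-(x\circ z)\circ y$ for all $x,y,z$. *)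

(* Defs.v *)
From HB Require Import structures.
From mathcomp Require Import all_boot all_order all_algebra.
Set Implicit Arguments. Unset Strict Implicit. Unset Printing Implicit Defensive.
Import GRing.Theory.
Local Open Scope ring_scope.

Definition bilinear_map (R : pzRingType) (U V W : lmodType R)
  (f : U -> V -> W) : Prop :=
  (forall (a : R) (x y : U) (z : V), f (a *: x + y) z = a *: f x z + f y z) /\
  (forall (a : R) (x : U) (y z : V), f x (a *: y + z) = a *: f x y + f x z).

Definition is_lie_algebra (R : pzRingType) (g : lmodType R)
  (br : g -> g -> g) : Prop :=
  [/\ bilinear_map br,
      (forall x, br x x = 0) &
      (forall x y z, br x (br y z) + br y (br z x) + br z (br x y) = 0)].

Definition is_representation (R : pzRingType) (g V : lmodType R)
  (br : g -> g -> g) (rho : g -> V -> V) : Prop :=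
  bilinear_map rho /\
  (forall x y v, rho (br x y) v = rho x (rho y v) - rho y (rho x v)).

Definition anti_O_operator (R : pzRingType) (g V : lmodType R)
  (br : g -> g -> g) (rho : g -> V -> V) (T : V -> g) : Prop :=
  forall u v, br (T u) (T v) = T (rho (T v) u - rho (T u) v).

Definition strong_op (R : pzRingType) (g V : lmodType R)
  (br : g -> g -> g) (rho : g -> V -> V) (T : V -> g) : Prop :=
  forall u v w, rho (br (T u) (T v)) w + rho (br (T v) (T w)) u
                + rho (br (T w) (T u)) v = 0.

Definition admissible_op (R : pzRingType) (g V : lmodType R)
  (rho : g -> V -> V) (T : V -> g) : Prop :=
  forall u v w,
    2%:R *: rho (T u) (rho (T v) w) - 2%:R *: rho (T u) (rho (T w) v)
    = rho (T (rho (T u) v)) w - rho (T (rho (T u) w)) v.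

Definition commut (R : pzRingType) (A : lmodType R) (circ : A -> A -> A)
  (x y : A) : A := circ x y - circ y x.

Definition admissible_novikov (R : pzRingType) (A : lmodType R)
  (circ : A -> A -> A) : Prop :=
  [/\ bilinear_map circ,
      (forall x y z, circ x (circ y z) - circ y (circ x z)
                     = circ (commut circ y x) z) &
      (forall x y z, 2%:R *: circ x (commut circ y z)
                     = circ (circ x y) z - circ (circ x z) y)].

(* Main.v *)
Require Import Defs.
From HB Require Import structures.
From mathcomp Require Import all_boot all_order all_algebra.
Import GRing.Theory.
Local Open Scope ring_scope.

Section Helpers.
Variables (R : pzRingType) (U W X : lmodType R) (f : U -> W -> X).
Hypothesis hf : bilinear_map f.

Lemma bl0l z : f 0 z = 0.
Proof. have := (hf.1 1 0 0 z); rewrite !scale1r addr0 => /(congr1 (fun t => t - f 0 z)). by rewrite addrK subrr. Qed.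
Lemma blDl x y z : f (x + y) z = f x z + f y z.
Proof. by have := hf.1 1 x y z; rewrite !scale1r. Qed.
Lemma blNl x z : f (- x) z = - f x z.
Proof. have := hf.1 (-1) x 0 z; rewrite addr0 bl0l addr0 !scaleN1r. done. Qed.
Lemma blBl x y z : f (x - y) z = f x z - f y z.
Proof. by rewrite blDl blNl. Qed.
Lemma bl0r x : f x 0 = 0.
Proof. have := (hf.2 1 x 0 0); rewrite !scale1r addr0 => /(congr1 (fun t => t - f x 0)). by rewrite addrK subrr. Qed.
Lemma blDr x y z : f x (y + z) = f x y + f x z.
Proof. by have := hf.2 1 x y z; rewrite !scale1r. Qed.
Lemma blNr x z : f x (- z) = - f x z.
Proof. have := hf.2 (-1) x z 0; rewrite addr0 bl0r addr0 !scaleN1r. done. Qed.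
Lemma blBr x y z : f x (y - z) = f x y - f x z.
Proof. by rewrite blDr blNr. Qed.
End Helpers.
Arguments bl0l {R U W X f} hf.
Arguments blDl {R U W X f} hf.
Arguments blNl {R U W X f} hf.
Arguments blBl {R U W X f} hf.
Arguments bl0r {R U W X f} hf.
Arguments blDr {R U W X f} hf.
Arguments blNr {R U W X f} hf.
Arguments blBr {R U W X f} hf.

Lemma key (M : zmodType) (p1 p2 p3 p4 p5 p6 a b c d e f : M) :
  p1 - p2 = d - a -> p3 - p4 = f - c -> p5 - p6 = b - e ->
  (p1 - p6) *+ 2 = a - b -> (p3 - p2) *+ 2 = c - d -> (p5 - p4) *+ 2 = e - f ->
  ((p1 - p2) + (p3 - p4) + (p5 - p6)) *+ 3 = 0.
Proof.
move=> K1 K2 K3 A1 A2 A3.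
have E : (p1 - p2) + (p3 - p4) + (p5 - p6) = (p1 - p6) + (p3 - p2) + (p5 - p4).
  by rewrite !addrA (ACl (1*6*3*2*5*4)%AC).
rewrite mulrSr.
have -> : ((p1 - p2) + (p3 - p4) + (p5 - p6)) *+ 2 = (a - b) + (c - d) + (e - f).
  by rewrite -A1 -A2 -A3 E -!mulrnDl.
rewrite K1 K2 K3 !addrA.
rewrite (ACl ((1*8)*(2*11)*(3*10)*(4*7)*(5*12)*(6*9))%AC) /=.
by rewrite !addrN !addNr !addr0.
Qed.

Theorem proposition3p15 (F : fieldType) (char0 : [pchar F] =i pred0)
  (g V : vectType F) (br : g -> g -> g) (rho : g -> V -> V)
  (T : {linear V -> g}) :
  is_lie_algebra br -> is_representation br rho ->
  anti_O_operator br rho T -> admissible_op rho T ->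
  strong_op br rho T /\ admissible_novikov (fun u v : V => - rho (T u) v).
Proof.
move=> _ [rb rep] anti adm.
have K u v w : rho (T u) (rho (T v) w) - rho (T v) (rho (T u) w)
    = rho (T (rho (T v) u)) w - rho (T (rho (T u) v)) w.
  by rewrite -rep anti raddfB /= (blBl rb).
have A u v w : (rho (T u) (rho (T v) w) - rho (T u) (rho (T w) v)) *+ 2
    = rho (T (rho (T u) v)) w - rho (T (rho (T u) w)) v.
  by rewrite -adm -scalerBr scaler_nat.
split.
  move=> u v w; rewrite !rep.
  set S := (X in X = 0).
  have H3 : S *+ 3 = 0.
    apply: key; [exact: K | exact: K | exact: K | exact: A | exact: A | exact: A].
  have n3 : (3%:R : F) != 0 by move/(pcharf0P F): char0 => ->.
  by rewrite -[S](scale1r) -(mulVf n3) -scalerA scaler_nat H3 scaler0.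
split.
- split=> [a x y z | a x y z].
    by rewrite linearP /= (rb.1) opprD scalerN.
  by rewrite (rb.2) opprD scalerN.
- move=> x y z; rewrite /commut.
  by rewrite !(blNr rb) !opprK K raddfD raddfN /= (blDl rb) (blNl rb) opprD opprK addrC.
- move=> x y z; rewrite /commut.
  rewrite opprK (blDr rb) (blNr rb) opprD opprK !raddfN /= !(blNl rb) !opprK.
  by rewrite -adm -scalerBr.
Qed.
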